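(* Let $\mu\in\mathcal P_c^*(\mathbb R^2)$. Then the functions $\theta\mapsto\operatorname{mean}(\widehat{\mathcal R}_\theta[\mu])$ from $\mathbb S_1$ to $\mathbb R$ and $\theta\mapsto\operatorname{std}(\widehat{\mathcal R}_\theta[\mu])$ from $\mathbb S_1$ to $[0,\infty)$ are continuous.
   Context: $\mathbb S_1=\{x\in\mathbb R^2:\|x\|=1\}$; $\mathcal R_\theta[\mu]=(\langle\cdot,\theta\rangle)_\#\mu$. Fix a reference Borel probability measure $\rho$ on $\mathbb R$ without atoms. For a probability measure $\nu$ on $\mathbb R$ with $F_\nu(t)=\nu((-\infty,t])$, $F_\nu^{[-1]}(t)=\inf\{s:F_\nu(s)>t\}$ and the CDT is $\hat\nu=F_\nu^{[-1]}\circ F_\rho$; $\widehat{\mathcal R}_\theta[\mu]$ is the CDT of $\mathcal R_\theta[\mu]$. For $g\in L^2_\rho(\mathbb R)$, $\operatorname{mean}(g)=\int g\,\mathrm d\rho$, $\operatorname{std}(g)=(\int|g-\operatorname{mean}(g)|^2\mathrm d\rho)^{1/2}$. $\mathcal P_c^*(\mathbb R^2)$ is the set of compactly supported Borel probability measures on $\mathbb R^2$ whose support has affine hull of dimension $>1$. *)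

(* Defs.v *)
From HB Require Import structures.
From mathcomp Require Import all_boot all_order all_algebra.
From mathcomp Require Import all_classical all_reals all_analysis.
Set Implicit Arguments. Unset Strict Implicit. Unset Printing Implicit Defensive.
Import Order.TTheory GRing.Theory Num.Theory.
Import numFieldNormedType.Exports.
Local Open Scope classical_set_scope.
Local Open Scope ring_scope.

Section Defs.
Variable R : realType.

Definition dot2 (x y : R * R) : R := x.1 * y.1 + x.2 * y.2.

Definition S1 : set (R * R) := [set th | th.1 ^+ 2 + th.2 ^+ 2 = 1].

Definition supp2 (mu : set (R * R) -> \bar R) : set (R * R) :=
  [set x | forall U : set (R * R), open U -> U x -> (0 < mu U)%E].

(* A subset of R^2 has affine hull of dimension <= 1 iff it lies on some
   affine line {x | a x1 + b x2 = c} with (a,b) <> (0,0). *)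
Definition in_a_line (A : set (R * R)) : Prop :=
  exists (a b c : R), (a, b) <> (0, 0) /\
    A `<=` [set x | a * x.1 + b * x.2 = c].

Definition Pc_star (mu : set (R * R) -> \bar R) : Prop :=
  compact (supp2 mu) /\ ~ in_a_line (supp2 mu).

(* CDF of the Radon projection R_theta[mu] = (<., theta>)_# mu *)
Definition cdf_proj (mu : set (R * R) -> \bar R) (th : R * R) (t : R) : R :=
  fine (mu [set x | dot2 x th <= t]).

Definition cdf (rho : set R -> \bar R) (t : R) : R :=
  fine (rho [set s | s <= t]).

Definition gen_inv (F : R -> R) (t : R) : R := inf [set s | t < F s].

Definition cdt_proj (rho : set R -> \bar R) (mu : set (R * R) -> \bar R)
  (th : R * R) : R -> R :=
  fun t => gen_inv (cdf_proj mu th) (cdf rho t).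

Definition meanr d (T : measurableType d) (rho : {measure set T -> \bar R})
  (g : T -> R) : R := Rintegral rho setT g.

Definition stdr d (T : measurableType d) (rho : {measure set T -> \bar R})
  (g : T -> R) : R :=
  Num.sqrt (Rintegral rho setT (fun t => (g t - meanr rho g) ^+ 2)).

End Defs.

(* Main.v *)
Require Import Defs.
From HB Require Import structures.
From mathcomp Require Import all_boot all_order all_algebra.
From mathcomp Require Import all_classical all_reals all_analysis.
From mathcomp Require Import measurable_realfun.
From mathcomp Require Import ring lra.
Import Order.TTheory GRing.Theory Num.Theory.
Import numFieldNormedType.Exports.
Local Open Scope classical_set_scope.
Local Open Scope ring_scope.
Section partA.
Context {R : realType}.
Local Open Scope ereal_scope.

Lemma ray_meas (t : R) : measurable [set s : R | (s <= t)%R].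
Proof.
rewrite (_ : [set s | _] = `]-oo, t]%classic); first exact: measurable_itv.
by apply/seteqP; split => x /=; rewrite in_itv.
Qed.

Lemma oray_meas (t : R) : measurable [set s : R | (s < t)%R].
Proof.
rewrite (_ : [set s | _] = `]-oo, t[%classic); first exact: measurable_itv.
by apply/seteqP; split => x /=; rewrite in_itv.
Qed.

Context d (T : measurableType d) (P : probability T R) (p : T -> R)
  (mp : measurable_fun setT p).

Lemma pre_le_meas (t : R) : measurable [set x | (p x <= t)%R].
Proof. by rewrite -[X in measurable X]setTI; exact: mp _ _ (ray_meas t). Qed.

Lemma pre_lt_meas (t : R) : measurable [set x | (p x < t)%R].
Proof. by rewrite -[X in measurable X]setTI; exact: mp _ _ (oray_meas t). Qed.

Lemma P_fin (A : set T) : measurable A -> P A < +oo.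
Proof. by move=> mA; apply: (le_lt_trans (probability_le1 _ mA)); exact: ltry. Qed.

Lemma cap_ge (F : (set T)^nat) (v : \bar R) : (forall n, measurable (F n)) ->
  {homo F : n m / (n <= m)%N >-> (m <= n)%O} ->
  (forall n, v <= P (F n)) -> v <= P (\bigcap_n F n).
Proof.
move=> mF hF H.
have cv : (P \o F) n @[n --> \oo] --> P (\bigcap_n F n).
  apply: nonincreasing_cvg_mu => //; first exact: P_fin.
  exact: bigcapT_measurable.
rewrite -(cvg_lim _ cv) //; apply: lime_ge; first by apply/cvg_ex; eexists; exact: cv.
exact: nearW.
Qed.

Lemma cup_le (F : (set T)^nat) (v : \bar R) : (forall n, measurable (F n)) ->
  {homo F : n m / (n <= m)%N >-> (n <= m)%O} ->
  (forall n, P (F n) <= v) -> P (\bigcup_n F n) <= v.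
Proof.
move=> mF hF H.
have cv : (P \o F) n @[n --> \oo] --> P (\bigcup_n F n).
  apply: nondecreasing_cvg_mu => //.
  exact: bigcupT_measurable.
rewrite -(cvg_lim _ cv) //; apply: lime_le; first by apply/cvg_ex; eexists; exact: cv.
exact: nearW.
Qed.

Lemma RCgen (a : R) (v : \bar R) :
  (forall t, (a < t)%R -> v <= P [set x | (p x <= t)%R]) ->
  v <= P [set x | (p x <= a)%R].
Proof.
move=> H.
pose F := fun n : nat => [set x | (p x <= a + n.+1%:R^-1)%R].
have capF : \bigcap_n F n = [set x | (p x <= a)%R].
  apply/seteqP; split => x /=.
    move=> Hx; rewrite leNgt; apply/negP => /ltr_add_invr[k Hk].
    by have := Hx k Logic.I; rewrite /F /= leNgt Hk.
  by move=> Hx n _; rewrite /F /= (le_trans Hx)// lerDl invr_ge0.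
rewrite -capF; apply: cap_ge.
- by move=> n; exact: pre_le_meas.
- move=> m n mn; apply/subsetPset => x; rewrite /F /= => Hx.
  by rewrite (le_trans Hx)// lerD2l lef_pV2 ?posrE ?ler_nat.
- by move=> n; apply: H; rewrite ltrDl invr_gt0 ltr0n.
Qed.

Lemma LCgen (a : R) (v : \bar R) :
  (forall t, (t < a)%R -> P [set x | (p x <= t)%R] <= v) ->
  P [set x | (p x < a)%R] <= v.
Proof.
move=> H.
pose F := fun n : nat => [set x | (p x <= a - n.+1%:R^-1)%R].
have cupF : \bigcup_n F n = [set x | (p x < a)%R].
  apply/seteqP; split => x /=.
    move=> [n _]; rewrite /F /= => Hx; apply: (le_lt_trans Hx).
    by rewrite ltrBlDr ltrDl invr_gt0 ltr0n.
  by move=> /ltr_add_invr[k Hk]; exists k => //; rewrite /F /= lerBrDr ltW.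
rewrite -cupF; apply: cup_le.
- by move=> n; exact: pre_le_meas.
- move=> m n mn; apply/subsetPset => x; rewrite /F /= => Hx.
  by rewrite (le_trans Hx)// lerD2l lerN2 lef_pV2 ?posrE ?ler_nat.
- by move=> n; apply: H; rewrite ltrBlDr ltrDl invr_gt0 ltr0n.
Qed.

Lemma lowgen (v : R) : (0 < v)%R -> exists t, P [set x | (p x <= t)%R] < v%:E.
Proof.
move=> v0; apply/not_existsP => H.
have H' t : v%:E <= P [set x | (p x <= t)%R] by rewrite leNgt; apply/negP/H.
pose F := fun n : nat => [set x | (p x <= - n%:R)%R].
have capF : \bigcap_n F n = set0.
  apply/seteqP; split => x //= Hx.
  have := Hx (Num.bound `|p x|) Logic.I; rewrite /F /= lerNr.
  have h := archi_boundP (normr_ge0 (p x)) => hn.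
  suff : (`|p x| < `|p x|)%R by rewrite ltxx.
  by apply: lt_le_trans h _; apply: (le_trans hn); rewrite -normrN ler_norm.
have : v%:E <= P (\bigcap_n F n).
  apply: cap_ge => //.
  - by move=> n; exact: pre_le_meas.
  - move=> m n mn; apply/subsetPset => x; rewrite /F /= => Hx.
    by rewrite (le_trans Hx)// lerN2 ler_nat.
  - by move=> n; exact: H'.
by rewrite capF measure0 lee_fin leNgt v0.
Qed.

Lemma upgen (v : R) : (v < 1)%R -> exists t, v%:E < P [set x | (p x <= t)%R].
Proof.
move=> v1; apply/not_existsP => H.
have H' t : P [set x | (p x <= t)%R] <= v%:E by rewrite leNgt; apply/negP/H.
pose F := fun n : nat => [set x | (p x <= n%:R)%R].
have cupF : \bigcup_n F n = setT.
  apply/seteqP; split => x //= _.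
  exists (Num.bound `|p x|) => //; rewrite /F /= ltW//.
  exact: le_lt_trans (ler_norm _) (archi_boundP (normr_ge0 _)).
have : P (\bigcup_n F n) <= v%:E.
  apply: cup_le => //.
  - by move=> n; exact: pre_le_meas.
  - move=> m n mn; apply/subsetPset => x; rewrite /F /= => Hx.
    by rewrite (le_trans Hx)// ler_nat.
  - by move=> n; exact: H'.
by rewrite cupF probability_setT lee_fin leNgt v1.
Qed.

End partA.
Section partB.
Context {R : realType} (rho : probability R R)
  (rho_noatom : forall t : R, rho [set t] = 0%E).
Local Open Scope ereal_scope.

Let Fr := Defs.cdf rho.

Lemma Fr_E t : rho [set s | (s <= t)%R] = (Fr t)%:E.
Proof. by rewrite /Fr /Defs.cdf fineK// fin_num_measure//; exact: ray_meas. Qed.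

Lemma Fr_ge0 t : (0 <= Fr t)%R.
Proof. by rewrite -lee_fin -Fr_E. Qed.

Lemma Fr_le1 t : (Fr t <= 1)%R.
Proof. by rewrite -lee_fin -Fr_E; apply: probability_le1; exact: ray_meas. Qed.

Lemma Fr_nd : {homo Fr : x y / (x <= y)%R}.
Proof.
move=> x y xy; rewrite -lee_fin -!Fr_E; apply: le_measure; rewrite ?inE;
  try exact: ray_meas.
by move=> s /= sx; apply: le_trans xy.
Qed.

Lemma Fr_meas : measurable_fun setT Fr.
Proof. exact: nondecreasing_measurable Fr_nd. Qed.

Lemma Fr_lt t : rho [set s | (s < t)%R] = (Fr t)%:E.
Proof.
rewrite -Fr_E (_ : [set s | (s <= t)%R] = [set s | (s < t)%R] `|` [set t]).
  rewrite measureU //; first by rewrite /= rho_noatom adde0.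
  - exact: oray_meas.
  - by apply/seteqP; split => x //= [xt xe]; rewrite xe ltxx in xt.
apply/seteqP; split => x /=.
- by rewrite le_eqVlt => /orP[/eqP ->|xt]; [right|left].
- by case => [/ltW|->].
Qed.

Lemma L1 (v : R) : (v <= 1)%R -> v%:E <= rho [set t | (Fr t < v)%R].
Proof.
move=> v1; have [v0|v0] := leP v 0%R.
  by apply: le_trans (measure_ge0 _ _); rewrite lee_fin.
set D := [set t | (Fr t < v)%R].
have mD : measurable D := @pre_lt_meas _ _ _ _ Fr_meas v.
have [t0 Ht0] := @lowgen R _ _ rho id (@measurable_id _ R setT) v v0.
have D0 : D t0 by rewrite /D /= -lte_fin -Fr_E.
have down t t' : (t <= t')%R -> D t' -> D t.
  by rewrite /D /= => tt' H; apply: le_lt_trans H; exact: Fr_nd.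
case: (pselect (has_ubound D)) => [ub|nub]; last first.
  have -> : D = setT.
    apply/seteqP; split=> // t _; apply/not_notP => nDt; apply: nub.
    exists t => d Dd; rewrite leNgt; apply/negP => td.
    by apply: nDt; apply: down Dd; exact: ltW.
  by rewrite probability_setT lee_fin.
have hs : has_sup D by split => //; exists t0.
set a := sup D.
have sub : [set s | (s < a)%R] `<=` D.
  move=> t /= ta; have [e De te] := sup_gt (ex_intro _ t0 D0) ta.
  by apply: down De; exact: ltW.
have H1 : v%:E <= rho [set s | (s < a)%R].
  rewrite Fr_lt -Fr_E; apply: (@RCgen R _ _ rho id (@measurable_id _ R setT)) => t hat.
  rewrite Fr_E lee_fin leNgt; apply/negP => Dt.
  by have := ub_le_sup ub Dt; rewrite leNgt hat.
apply: le_trans H1 _; apply: le_measure; rewrite ?inE //; exact: oray_meas.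
Qed.

Lemma L2 (v : R) : (0 <= v)%R -> (v < 1)%R ->
  rho [set t | (Fr t <= v)%R] <= v%:E.
Proof.
move=> v0 v1.
set D := [set t | (Fr t <= v)%R].
have mD : measurable D := @pre_le_meas _ _ _ _ Fr_meas v.
case: (pselect (exists d, D d)) => [[d0 Dd0]|nD]; last first.
  have -> : D = set0 by apply/seteqP; split => // x Dx; apply: nD; exists x.
  by rewrite measure0 lee_fin.
have [t1 Ht1] := @upgen R _ _ rho id (@measurable_id _ R setT) v v1.
have ub : has_ubound D.
  exists t1 => d Dd; rewrite leNgt; apply/negP => td.
  have h2 := Fr_nd _ _ (ltW td); move: Ht1; rewrite Fr_E lte_fin => h1.
  by have := lt_le_trans h1 h2; rewrite ltNge Dd.
set a := sup D.
have sub : D `<=` [set s | (s <= a)%R] by move=> t Dt; exact: ub_le_sup.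
have H1 : rho [set s | (s <= a)%R] <= v%:E.
  rewrite Fr_E -Fr_lt; apply: (@LCgen R _ _ rho id (@measurable_id _ R setT)) => t ta.
  have [e De te] := sup_gt (ex_intro _ d0 Dd0) ta.
  by rewrite Fr_E lee_fin; apply: le_trans De; apply: Fr_nd; exact: ltW.
apply: le_trans H1; apply: le_measure; rewrite ?inE //; exact: ray_meas.
Qed.

End partB.
Section uniq.
Context {R : realType}.
Local Open Scope ereal_scope.

Lemma meas_eq_rays (m1 m2 : {measure set R -> \bar R}) :
  (forall r, m1 [set s | (s <= r)%R] = m2 [set s | (s <= r)%R]) ->
  (forall r, m1 [set s | (s <= r)%R] < +oo) ->
  forall A, measurable A -> m1 A = m2 A.
Proof.
move=> H fin A mA.
have fin2 r : m2 [set s | (s <= r)%R] < +oo by rewrite -H.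
have ocE (a b : R) : (a < b)%R -> `]a, b]%classic = [set s | (s <= b)%R] `\` [set s | (s <= a)%R].
  move=> ab; apply/seteqP; split => x /=; rewrite in_itv /=.
    by move=> /andP[ax xb]; split => //; rewrite leNgt ax.
  by move=> [xb /negP]; rewrite -ltNge => ax; rewrite ax xb.
have mI (a b : R) : (a < b)%R ->
    [set s | (s <= b)%R] `&` [set s | (s <= a)%R] = [set s | (s <= a)%R].
  move=> ab; apply/seteqP; split => x /=; first by case.
  by move=> xa; split => //; apply: le_trans xa (ltW ab).
apply: (@measure_unique _ R R (@ocitv R) (fun k : nat => `](- k%:R)%R, (k%:R)%R]%classic) _ _ _ _ m1 m2 _ _ A mA).
- reflexivity.
- exact: ocitvI.
- move=> k; exact: is_ocitv.
- exact: bigcup_itvT.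
- move=> _ [[a b] _ <-] /=.
  have [ab|ba] := ltP a b; last first.
    by rewrite set_itv_ge ?measure0 // bnd_simp -leNgt.
  rewrite ocE // (measureD (ray_meas b) (ray_meas a) (fin b)).
  rewrite (measureD (ray_meas b) (ray_meas a) (fin2 b)) !mI //.
  by congr (_ - _); apply: H.
- move=> k; apply: le_lt_trans (fin k%:R).
  apply: le_measure; rewrite ?inE; [exact: measurable_itv|exact: ray_meas|].
  by move=> x /=; rewrite in_itv /= => /andP[].
Qed.

End uniq.
Section partC.
Context {R : realType}.

Definition rr (n : nat) : R := n.+1%:R^-1.
Definition cen (a b n : nat) : R := (a%:R - b%:R) * rr n.
Definition itv1 (a b n : nat) : set R := `]cen a b n - rr n, cen a b n + rr n[%classic.
Definition box (a1 b1 a2 b2 n : nat) : set (R * R) :=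
  itv1 a1 b1 n `*` itv1 a2 b2 n.

Lemma rr_gt0 n : 0 < rr n. Proof. by rewrite /rr invr_gt0 ltr0n. Qed.

Lemma box_meas a1 b1 a2 b2 n : measurable (box a1 b1 a2 b2 n).
Proof. by apply: measurableX; exact: measurable_itv. Qed.

Lemma int_nat (z : int) : exists a b : nat, (z%:~R : R) = a%:R - b%:R.
Proof.
case: z => [a|b]; first by exists a, 0%N; rewrite subr0.
by exists 0%N, b.+1; rewrite NegzE sub0r mulrNz.
Qed.

Lemma grid (x : R) n : exists a b, cen a b n <= x < cen a b n + rr n.
Proof.
have [h1 h2] := andP (mem_rg1_floor (x * n.+1%:R)).
have [a [b ab]] := int_nat (Num.floor (x * n.+1%:R)).
exists a, b; rewrite /cen /rr -ab.
have n0 : 0 < n.+1%:R :> R by rewrite ltr0n.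
apply/andP; split; first by rewrite -/(_ / _) ler_pdivrMr.
by rewrite -[X in _ + X]mul1r -mulrDl -/(_ / _) ltr_pdivlMr.
Qed.

Lemma open_eps (U : set (R * R)) x : open U -> U x ->
  exists2 e : R, 0 < e &
    forall y : R * R, `|y.1 - x.1| < e -> `|y.2 - x.2| < e -> U y.
Proof.
move=> oU Ux; have := oU x Ux; move=> /nbhs_ballP [e e0 H].
by exists e => // y h1 h2; apply: H; split => /=; rewrite /ball /= distrC.
Qed.

Lemma cover_box (U : set (R * R)) x : open U -> U x ->
  exists a1 b1 a2 b2 n, box a1 b1 a2 b2 n x /\ box a1 b1 a2 b2 n `<=` U.
Proof.
move=> oU Ux; have [e e0 He] := open_eps _ _ oU Ux.
have [n hn] : exists n, rr n < e / 2.
  have [k hk] := @ltr_add_invr R 0 (e / 2) (divr_gt0 e0 (ltr0Sn _ 1)).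
  by exists k; rewrite add0r in hk.
have r0 := rr_gt0 n.
have [a1 [b1 /andP[h11 h12]]] := grid x.1 n.
have [a2 [b2 /andP[h21 h22]]] := grid x.2 n.
exists a1, b1, a2, b2, n; split.
  by split; rewrite /itv1 /= in_itv /=; apply/andP; split; lra.
move=> y [/= hy1 hy2]; move: hy1 hy2; rewrite /itv1 /= !in_itv /=.
move=> /andP[hy11 hy12] /andP[hy21 hy22]; apply: He; rewrite ltr_norml;
  apply/andP; split; lra.
Qed.

Lemma open_meas (U : set (R * R)) : open U -> measurable U.
Proof.
move=> oU.
have -> : U = \bigcup_a1 \bigcup_b1 \bigcup_a2 \bigcup_b2 \bigcup_n
    [set y | box a1 b1 a2 b2 n `<=` U /\ box a1 b1 a2 b2 n y].
  apply/seteqP; split => [x Ux|x].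
    have [a1 [b1 [a2 [b2 [n [h1 h2]]]]]] := cover_box _ _ oU Ux.
    by exists a1 => //; exists b1 => //; exists a2 => //; exists b2 => //; exists n.
  by move=> [a1 _ [b1 _ [a2 _ [b2 _ [n _ [h1 h2]]]]]]; apply: h1.
apply: bigcupT_measurable => a1; apply: bigcupT_measurable => b1.
apply: bigcupT_measurable => a2; apply: bigcupT_measurable => b2.
apply: bigcupT_measurable => n.
case: (pselect (box a1 b1 a2 b2 n `<=` U)) => h.
  rewrite (_ : [set y | _] = box a1 b1 a2 b2 n); first exact: box_meas.
  by apply/seteqP; split => y /=; [case|split].
by rewrite (_ : [set y | _] = set0) //; apply/seteqP; split => y //= [].
Qed.

End partC.
Section partC2.
Context {R : realType}.
Local Open Scope ereal_scope.

Lemma supp_null (mu : {measure set (R * R) -> \bar R}) :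
  mu.-negligible (~` supp2 mu).
Proof.
apply: (@negligibleS _ _ _ mu (\bigcup_a1 \bigcup_b1 \bigcup_a2 \bigcup_b2 \bigcup_n
    [set y | mu (box a1 b1 a2 b2 n) = 0 /\ box a1 b1 a2 b2 n y])).
  move=> y ny.
  have : ~ (forall U, open U -> U y -> 0 < mu U) by [].
  move/existsNP => [U] /not_implyP [oU] /not_implyP [Uy hU].
  have mU := open_meas _ oU.
  have U0 : mu U = 0.
    by apply/eqP; rewrite eq_le measure_ge0 andbT leNgt; apply/negP.
  have [a1 [b1 [a2 [b2 [n [h1 h2]]]]]] := cover_box _ _ oU Uy.
  exists a1 => //; exists b1 => //; exists a2 => //; exists b2 => //; exists n => //.
  split => //; apply/eqP; rewrite eq_le measure_ge0 andbT -U0.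
  by apply: le_measure => //; rewrite inE //; exact: box_meas.
apply: negligible_bigcup => a1; apply: negligible_bigcup => b1.
apply: negligible_bigcup => a2; apply: negligible_bigcup => b2.
apply: negligible_bigcup => n.
case: (pselect (mu (box a1 b1 a2 b2 n) = 0)) => h.
  rewrite (_ : [set y | _] = box a1 b1 a2 b2 n).
    by apply/negligibleP => //; exact: box_meas.
  by apply/seteqP; split => y /=; [case|split].
rewrite (_ : [set y | _] = set0); first exact: negligible_set0.
by apply/seteqP; split => y //= [].
Qed.

Lemma compact_bnd (A : set (R*R)) : compact A -> exists M, forall x, A x -> (`|x| <= M)%R.
Proof.
move=> /compact_bounded; rewrite /=; move=> [M [_ H]].
by exists (M + 1)%R => x Ax; apply: (H (M+1)%R) => //; rewrite ltrDl.
Qed.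

Lemma norm_pair (x : R * R) : (`|x.1| <= `|x|)%R /\ (`|x.2| <= `|x|)%R.
Proof.
by rewrite /Num.norm /= /ProdNormedZmodule.norm /= !le_max !lexx orbT; split.
Qed.

Lemma supp_bound (mu : {measure set (R * R) -> \bar R}) : compact (supp2 mu) ->
  exists M : R, (0 < M)%R /\
    mu.-negligible (~` [set x | (`|x.1| <= M)%R /\ (`|x.2| <= M)%R]).
Proof.
move=> /compact_bnd [M0 HM]; exists (`|M0| + 1)%R; split.
  by rewrite ltr_wpDl.
apply: negligibleS (supp_null mu) => x nx sx; apply: nx.
have := HM x sx; have [h1 h2] := norm_pair x => h.
have hM : (M0 <= `|M0| + 1)%R by rewrite (le_trans (ler_norm _))// lerDl.
by split; [apply: le_trans h1 _; apply: le_trans h hM|apply: le_trans h2 _; apply: le_trans h hM].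
Qed.

End partC2.
Section aeint.
Context {R : realType}.
Local Open Scope ereal_scope.

Lemma ae_int d (T : measurableType d) (P : probability T R) (f : T -> R) (C : R) :
  measurable_fun setT f -> {ae P, forall x, (`|f x| <= C)%R} ->
  P.-integrable setT (EFin \o f).
Proof.
move=> mf hae; apply/integrableP; split; first exact/measurable_EFinP.
have mf1 : measurable_fun setT (fun x => `|(EFin \o f) x|).
  by apply: measurableT_comp => //; exact/measurable_EFinP.
apply: (@le_lt_trans _ _ (\int[P]_(x in setT) (cst (`|C|%:E)) x)).
  apply: ae_ge0_le_integral => //.
  all: try (by move=> x _; rewrite lee_fin).
  all: try exact: measurable_cst.
  apply: filterS hae => x hx _ /=; rewrite lee_fin.
  by apply: le_trans hx (ler_norm _).
rewrite integral_cst //; apply: lte_mul_pinfty => //.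
by apply: (le_lt_trans (probability_le1 _ _)) => //; exact: ltry.
Qed.

End aeint.
Section partD.
Context {R : realType} (mu : probability (R * R)%type R) (M : R)
  (M0 : (0 < M)%R)
  (hM : mu.-negligible (~` [set x : R * R | (`|x.1| <= M)%R /\ (`|x.2| <= M)%R])).
Variable th : (R * R)%type.
Local Open Scope ereal_scope.

Let p := fun x : R * R => dot2 x th.
Let B := (M * (`|th.1| + `|th.2|))%R.
Let F := cdf_proj mu th.

Lemma p_meas : measurable_fun setT p.
Proof.
by rewrite /p /dot2; apply: measurable_funD; apply: measurable_funM.
Qed.

Lemma B_ge0 : (0 <= B)%R.
Proof. by rewrite /B mulr_ge0 ?addr_ge0 // ltW. Qed.

Lemma p_bnd x : (`|x.1| <= M)%R -> (`|x.2| <= M)%R -> (`|p x| <= B)%R.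
Proof.
move=> h1 h2; rewrite /p /dot2 /B.
apply: le_trans (ler_normD _ _) _; rewrite mulrDr !normrM.
by apply: lerD; apply: ler_wpM2r.
Qed.

Lemma FE s : mu [set x | (p x <= s)%R] = (F s)%:E.
Proof. by rewrite /F /cdf_proj fineK// fin_num_measure//; exact: pre_le_meas p_meas s. Qed.

Lemma F_ge0 s : (0 <= F s)%R.
Proof. by rewrite -lee_fin -FE. Qed.

Lemma F_le1 s : (F s <= 1)%R.
Proof. by rewrite -lee_fin -FE; apply: probability_le1; exact: pre_le_meas p_meas s. Qed.

Lemma F_nd : {homo F : x y / (x <= y)%R}.
Proof.
move=> x y xy; rewrite -lee_fin -!FE; apply: le_measure; rewrite ?inE;
  try exact: pre_le_meas p_meas _.
by move=> s /= sx; apply: le_trans xy.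
Qed.

Lemma F_low s : (s < - B)%R -> F s = 0%R.
Proof.
move=> sB; apply/eqP; rewrite -(@eqe R) -FE; apply/eqP.
apply/negligibleP; first exact: pre_le_meas p_meas s.
apply: negligibleS hM => x /= ps [h1 h2].
have := p_bnd _ h1 h2; rewrite ler_norml => /andP[h _].
by have := lt_le_trans sB h; rewrite ltNge ps.
Qed.

Lemma F_up s : (B <= s)%R -> F s = 1%R.
Proof.
move=> Bs.
have mA : measurable [set x | (p x <= s)%R] by exact: pre_le_meas p_meas s.
have : mu (~` [set x | (p x <= s)%R]) = 0.
  apply/negligibleP; first exact: measurableC.
  apply: negligibleS hM => x /= ps [h1 h2]; apply: ps.
  by have := p_bnd _ h1 h2; rewrite ler_norml => /andP[_ h]; apply: le_trans h Bs.
rewrite probability_setC // FE -EFinB => /eqP; rewrite eqe subr_eq0 => /eqP.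
by move=> <-.
Qed.

Lemma F_RC (a v : R) : (forall t, (a < t)%R -> (v <= F t)%R) -> (v <= F a)%R.
Proof.
move=> H; rewrite -lee_fin -FE; apply: (@RCgen R _ _ mu p p_meas) => t hat.
by rewrite FE lee_fin; apply: H.
Qed.

Let S u := [set s | (u < F s)%R].
Let Q u := gen_inv F u.

Lemma S_ne u : (u < 1)%R -> S u B.
Proof. by move=> u1; rewrite /S /= F_up. Qed.

Lemma S_lb u : (0 <= u)%R -> lbound (S u) (- B)%R.
Proof.
move=> u0 s; rewrite /S /= => us; rewrite leNgt; apply/negP => sB.
by move: us; rewrite F_low // ltNge u0.
Qed.

Lemma Qa u s : (0 <= u)%R -> (u < F s)%R -> (Q u <= s)%R.
Proof. by move=> u0 us; apply: ge_inf => //; exists (- B)%R; exact: S_lb. Qed.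

Lemma Qb u s : (0 <= u)%R -> (u < 1)%R -> (F s < u)%R -> (s < Q u)%R.
Proof.
move=> u0 u1 su; rewrite ltNge; apply/negP => Qs.
suff : (u <= F s)%R by rewrite leNgt su.
apply: F_RC => t st.
have [e Se et] := inf_lt (ex_intro _ B (S_ne _ u1)) (le_lt_trans Qs st).
by apply: ltW; apply: lt_le_trans Se _; apply: F_nd; exact: ltW.
Qed.

Lemma Qmono u u' : (0 <= u)%R -> (u <= u')%R -> (u' < 1)%R -> (Q u <= Q u')%R.
Proof.
move=> u0 uu u1; apply: lb_le_inf; first by exists B; exact: S_ne.
move=> s; rewrite /S /= => us; apply: Qa => //; exact: le_lt_trans uu us.
Qed.

Lemma Q_lb u : (0 <= u)%R -> (u < 1)%R -> (- B <= Q u)%R.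
Proof. by move=> u0 u1; apply: lb_le_inf; [exists B; exact: S_ne|exact: S_lb]. Qed.

Lemma Q_ub u : (0 <= u)%R -> (u < 1)%R -> (Q u <= B)%R.
Proof. by move=> u0 u1; apply: Qa => //; rewrite F_up. Qed.

Lemma Q1 : Q 1%R = 0%R.
Proof.
rewrite /Q /gen_inv (_ : [set s | _] = set0) ?inf0 //.
by apply/seteqP; split => s //=; rewrite ltNge F_le1.
Qed.

Context (rho : probability R R) (rho_noatom : forall t : R, rho [set t] = 0).

Let Fr := Defs.cdf rho.
Let g := cdt_proj rho mu th.

Lemma gE t : g t = Q (Fr t). Proof. by []. Qed.

Lemma Fr1 t : ~ (Fr t < 1)%R -> Fr t = 1%R.
Proof. by move=> h; apply/eqP; rewrite eq_le Fr_le1 leNgt; apply/negP. Qed.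

Lemma g_bnd t : (`|g t| <= B)%R.
Proof.
rewrite gE; case: (pselect (Fr t < 1)%R) => h.
  by rewrite ler_norml Q_lb ?Q_ub ?Fr_ge0.
by rewrite Fr1 // Q1 normr0 B_ge0.
Qed.

Lemma g_meas : measurable_fun setT g.
Proof.
set D := [set t | (Fr t < 1)%R].
have mD : measurable D := @pre_lt_meas _ _ _ _ (Fr_meas rho) 1%R.
have -> : [set: R] = D `|` ~` D by rewrite setUv.
apply/measurable_funU => //; first exact: measurableC.
split.
  pose g' t := if (Fr t < 1)%R then Q (Fr t) else B.
  apply: (@eq_measurable_fun _ _ _ _ _ g').
    by move=> t; rewrite inE /D /= /g' => ->.
  apply: nondecreasing_measurable => // t t' tt'; rewrite /g'.
  have h := Fr_nd rho _ _ tt'.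
  case: ifPn => h1; case: ifPn => h2.
  - by apply: Qmono => //; exact: Fr_ge0.
  - exact: Q_ub (Fr_ge0 _ _) h1.
  - by exfalso; move: h1; rewrite (le_lt_trans h h2).
  - by [].
apply: (@eq_measurable_fun _ _ R R _ (fun _ : R => (0 : R)%R)); last exact: measurable_cst.
by move=> t; rewrite inE /D /= => h; rewrite gE Fr1 // Q1.
Qed.

Lemma g_dist s : rho [set t | (g t <= s)%R] = mu [set x | (p x <= s)%R].
Proof.
set v := F s; rewrite FE -/v.
set D := [set t | (Fr t < 1)%R].
have mD : measurable D := @pre_lt_meas _ _ _ _ (Fr_meas rho) 1%R.
have mG : measurable [set t | (g t <= s)%R] := @pre_le_meas _ _ _ _ g_meas s.
have rD : rho D = 1.
  apply/eqP; rewrite eq_le probability_le1 //=.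
  exact: (@L1 R rho rho_noatom 1%R (lexx _)).
have rN : rho (~` D) = 0 by rewrite probability_setC // rD subee.
have [v1|v1] := leP 1%R v.
  have -> : v = 1%R by apply/eqP; rewrite eq_le v1 F_le1.
  apply/eqP; rewrite eq_le probability_le1 //=.
  rewrite -rD; apply: le_measure; rewrite ?inE //.
  move=> t; rewrite /D /= => h; rewrite gE; apply: Qa; first exact: Fr_ge0.
  by apply: lt_le_trans h _; rewrite -/v v1.
apply/eqP; rewrite eq_le; apply/andP; split.
  have mA : measurable [set t | (Fr t <= v)%R] := @pre_le_meas _ _ _ _ (Fr_meas rho) v.
  have h1 : rho [set t | (g t <= s)%R] <= rho ([set t | (Fr t <= v)%R] `|` ~` D).
    apply: le_measure; rewrite ?inE //.
    - by apply: measurableU => //; exact: measurableC.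
    - move=> t /= gts; case: (pselect (Fr t < 1)%R) => h; last by right.
      left; rewrite leNgt; apply/negP => vt.
      by have := Qb _ _ (Fr_ge0 _ _) h vt; rewrite -gE ltNge gts.
  have h3 : rho [set t | (Fr t <= v)%R] + rho (~` D) <= v%:E.
    rewrite rN adde0; apply: (@L2 R rho rho_noatom v (F_ge0 _) v1).
  exact: le_trans h1 (le_trans (measureU2 rho mA (measurableC mD)) h3).
apply: le_trans (@L1 R rho rho_noatom v (ltW v1)) _.
apply: le_measure; rewrite ?inE //; first exact: (@pre_lt_meas _ _ _ _ (Fr_meas rho) v).
move=> t /= h; rewrite gE; apply: Qa; first exact: Fr_ge0.
exact: h.
Qed.

Lemma push_eq A : measurable A -> rho (g @^-1` A) = mu (p @^-1` A).
Proof.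
move=> mA.
pose m1' := (pushforward rho g : {measure set R -> \bar R}).
pose m2' := (pushforward mu p : {measure set R -> \bar R}).
have m1 := m1' g_meas; have m2 := m2' p_meas.
have := @meas_eq_rays R (m1' g_meas) (m2' p_meas) _ _ A mA; apply.
  by move=> r; rewrite /m1' /m2' /pushforward /=; exact: g_dist.
by move=> r; apply: (le_lt_trans (probability_le1 _ _)); [exact: (@pre_le_meas _ _ _ _ g_meas r)|exact: ltry].
Qed.


Lemma hae : {ae mu, forall x : R * R, (`|x.1| <= M)%R /\ (`|x.2| <= M)%R}.
Proof. exact: hM. Qed.

Definition goodf (f : R * R -> R) := measurable_fun setT f /\
  exists C : R, forall x : R * R, (`|x.1| <= M)%R -> (`|x.2| <= M)%R -> (`|f x| <= C)%R.

Lemma good_int f : goodf f -> mu.-integrable setT (EFin \o f).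
Proof.
move=> [mf [C hC]]; apply: (@ae_int R _ _ mu f C mf).
by apply: filterS hae => x [h1 h2]; exact: hC.
Qed.

Lemma goodD f1 f2 : goodf f1 -> goodf f2 -> goodf (fun x => f1 x + f2 x)%R.
Proof.
move=> [m1 [C1 h1]] [m2 [C2 h2]]; split; first exact: measurable_funD.
exists (C1 + C2)%R => x a b; apply: le_trans (ler_normD _ _) _.
by apply: lerD; [exact: h1|exact: h2].
Qed.

Lemma goodM f1 f2 : goodf f1 -> goodf f2 -> goodf (fun x => f1 x * f2 x)%R.
Proof.
move=> [m1 [C1 h1]] [m2 [C2 h2]]; split; first exact: measurable_funM.
exists (C1 * C2)%R => x a b; rewrite normrM.
by apply: ler_pM => //; [exact: h1|exact: h2].
Qed.

Lemma good_cst c : goodf (fun _ => c).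
Proof. by split; [exact: measurable_cst|exists `|c|%R]. Qed.

Lemma good_fst : goodf (fun x => x.1).
Proof. by split; [exact: measurable_fst|exists M => x]. Qed.

Lemma good_snd : goodf (fun x => x.2).
Proof. by split; [exact: measurable_snd|exists M => x]. Qed.

Local Notation I := (Rintegral mu setT).

Lemma I_D f1 f2 : goodf f1 -> goodf f2 -> I (fun x => f1 x + f2 x)%R = (I f1 + I f2)%R.
Proof. by move=> g1 g2; rewrite RintegralD //; exact: good_int. Qed.

Lemma I_Z a f : goodf f -> I (fun x => a * f x)%R = (a * I f)%R.
Proof. by move=> g1; rewrite RintegralZl //; exact: good_int. Qed.

Lemma I_cst c : I (fun _ => c) = c.
Proof.
rewrite Rintegral_cst // (_ : fine _ = 1%R) ?mulr1 //.
exact: (congr1 fine (probability_setT mu)).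
Qed.

Ltac gd := repeat first [apply: goodD | apply: goodM | apply: good_cst
  | apply: good_fst | apply: good_snd].

Lemma int_eq (h : R -> R) (mh : measurable_fun setT h) (C : R)
  (hC : forall y, (`|y| <= B)%R -> (`|h y| <= C)%R) :
  Rintegral rho setT (fun t => h (g t)) = Rintegral mu setT (fun x => h (p x)).
Proof.
have mEh : measurable_fun setT (EFin \o h) by exact/measurable_EFinP.
have ig : rho.-integrable (g @^-1` setT) ((EFin \o h) \o g).
  rewrite preimage_setT; apply: (@ae_int R _ _ _ (h \o g) C).
    by apply: measurableT_comp => //; exact: g_meas.
  by apply: aeW => t; apply: hC; exact: g_bnd.
have ip : mu.-integrable (p @^-1` setT) ((EFin \o h) \o p).
  rewrite preimage_setT; apply: (@ae_int R _ _ _ (h \o p) C).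
    by apply: measurableT_comp => //; exact: p_meas.
  by apply: filterS hae => x [h1 h2]; apply: hC; exact: p_bnd.
have e1 := integral_pushforward g_meas mEh ig measurableT.
have e2 := integral_pushforward p_meas mEh ip measurableT.
rewrite /Rintegral; congr fine.
transitivity (\int[rho]_(x in g @^-1` setT) ((EFin \o h) \o g) x); first by [].
transitivity (\int[mu]_(x in p @^-1` setT) ((EFin \o h) \o p) x); last by [].
apply: (eq_trans (esym e1)); apply: (eq_trans _ e2).
apply: eq_measure_integral.
all: try exact: p_meas.
all: try exact: g_meas.
by intros; apply: push_eq.
Qed.


Lemma mean_formula : meanr rho g =
  (th.1 * I (fun x => x.1) + th.2 * I (fun x => x.2))%R.
Proof.
have e := @int_eq id (@measurable_id _ R setT) B (fun y hy => hy).
rewrite /meanr; transitivity (I (fun x => p x)); first exact: e.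
rewrite (_ : (fun x => p x) = (fun x => th.1 * x.1 + th.2 * x.2)%R); last first.
  by apply: funext => x; rewrite /p /dot2 mulrC [(x.2 * _)%R]mulrC.
rewrite I_D; [|gd|gd].
by rewrite !I_Z; [|gd|gd].
Qed.

Lemma std_formula : let c := (th.1 * I (fun x => x.1) + th.2 * I (fun x => x.2))%R in
  stdr rho g = Num.sqrt (th.1 ^+ 2 * I (fun x => x.1 * x.1) +
    (2 * th.1 * th.2 * I (fun x => x.1 * x.2) +
    (th.2 ^+ 2 * I (fun x => x.2 * x.2) +
    (- 2 * c * th.1 * I (fun x => x.1) +
    (- 2 * c * th.2 * I (fun x => x.2) + c ^+ 2)))))%R.
Proof.
move=> c; rewrite /stdr mean_formula -/c; congr Num.sqrt.
have mh : measurable_fun setT (fun y : R => (y - c) ^+ 2)%R.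
  by apply: measurable_funX; apply: measurable_funB => //; exact: measurable_cst.
have e := @int_eq (fun y : R => (y - c) ^+ 2)%R mh ((B + `|c|) ^+ 2)%R.
rewrite e; last first.
  move=> y hy; rewrite normrX; apply: lerXn2r; rewrite ?nnegrE ?addr_ge0 //.
  - exact: B_ge0.
  - by apply: le_trans (ler_normB _ _) _; apply: lerD.
rewrite (_ : (fun x => (p x - c) ^+ 2)%R = (fun x => th.1 ^+ 2 * (x.1 * x.1) +
    (2 * th.1 * th.2 * (x.1 * x.2) +
    (th.2 ^+ 2 * (x.2 * x.2) +
    (- 2 * c * th.1 * x.1 +
    (- 2 * c * th.2 * x.2 + c ^+ 2)))))%R); last first.
  by apply: funext => x; rewrite /p /dot2; ring.
rewrite I_D; [|gd|gd]; rewrite I_D; [|gd|gd]; rewrite I_D; [|gd|gd].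
rewrite I_D; [|gd|gd]; rewrite I_D; [|gd|gd].
by rewrite I_cst !I_Z; gd.
Qed.

End partD.

Lemma cont_fst {R : realType} : continuous (fun x : R * R => x.1).
Proof. by move=> x; apply: cvg_fst. Qed.
Lemma cont_snd {R : realType} : continuous (fun x : R * R => x.2).
Proof. by move=> x; apply: cvg_snd. Qed.

Theorem lemma5 (R : realType) (rho : probability R R)
  (rho_noatom : forall t : R, rho [set t] = 0%E)
  (mu : probability (R * R)%type R) (hmu : Pc_star mu) :
  {within (@S1 R), continuous (fun th => meanr rho (cdt_proj rho mu th))} /\
  {within (@S1 R), continuous (fun th => stdr rho (cdt_proj rho mu th))}.
Proof.
have [M [M0 hM]] := supp_bound mu hmu.1.
set E1 := Rintegral mu setT (fun x => x.1).
set E2 := Rintegral mu setT (fun x => x.2).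
set E11 := Rintegral mu setT (fun x => x.1 * x.1).
set E12 := Rintegral mu setT (fun x => x.1 * x.2).
set E22 := Rintegral mu setT (fun x => x.2 * x.2).
have cm : continuous (fun th : R * R => th.1 * E1 + th.2 * E2).
  move=> x; change {for x, continuous (fun th : R * R => th.1 * E1 + th.2 * E2)}.
  apply: continuousD; apply: continuousM;
    (exact: cont_fst || exact: cont_snd || exact: cst_continuous).
split; apply: continuous_subspaceT.
  rewrite (_ : (fun th => _) = (fun th : R * R => th.1 * E1 + th.2 * E2)) //.
  by apply: funext => th; rewrite (@mean_formula R mu M M0 hM th rho rho_noatom).
rewrite (_ : (fun th => _) = (fun th : R * R => Num.sqrt (th.1 ^+ 2 * E11 +
    (2 * th.1 * th.2 * E12 + (th.2 ^+ 2 * E22 +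
    (- 2 * (th.1 * E1 + th.2 * E2) * th.1 * E1 +
    (- 2 * (th.1 * E1 + th.2 * E2) * th.2 * E2 + (th.1 * E1 + th.2 * E2) ^+ 2)))))));
  last by apply: funext => th; rewrite (@std_formula R mu M M0 hM th rho rho_noatom).
move=> x; apply: continuous_comp; last exact: sqrt_continuous.
have c1 := cont_fst x; have c2 := cont_snd x; have cc := cm x.
have k (a : R) : {for x, continuous (fun _ : R * R => a)} by exact: cst_continuous.
repeat first [apply: continuousD | apply: continuousM | exact: c1 | exact: c2
  | exact: cc | exact: k | apply: (@continuousM _ _ (fun th : R * R => th.1 * E1 + th.2 * E2))
  | rewrite expr2 ].
Qed.
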